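(* Let $R$ be as in the standing setup. If the $m$-adic filtration of $R$ satisfies the BF condition, then it is essentially divisible.
   Context: Standing setup: $k$ is a field and $R$ is a complete local domain with $k\subseteq R\subseteq k[[t]]$, residue field $k$, maximal ideal $m$, and nonzero conductor $(R:k[[t]])\neq 0$. Let $v$ be the $t$-adic valuation, $S=v(R)=\{v(r): r\in R, r\neq 0\}$, $e$ the smallest positive element of $S$, and $w_j$ the smallest element of $S$ congruent to $j\pmod e$ ($j=0,\dots,e-1$). For a nonzero ideal $I$, $v(I)=\{v(a): a\in I, a\ne0\}$; $m^0=R$. For $a\in R$, $\operatorname{ord}(a)=\max\{i: a\in m^i\}$; for $s\in S$, $\operatorname{vord}(s)=\max\{i: s\in v(m^i)\}$. A minimal reduction of $m$ is $xR$ with $v(x)=e$. The $m$-adic filtration is essentially divisible with respect to $xR$ if for every $u\in v(xR)$ there is $a\in xR$ with $v(a)=u$ and $\operatorname{ord}(a)=\operatorname{vord}(u)$; it is essentially divisible if this holds for some $x$ with $v(x)=e$. The $m$-adic filtration satisfies the BF condition if there exist $x\in R$ with $v(x)=e$ and $f_0,\ldots,f_{e-1}\in R$ with $v(f_j)=w_j$ such that for every $i\ge0$, $m^i$ is a free $k[[x]]$-module with a basis of the form $x^{h_0}f_0,\ldots,x^{h_{e-1}}f_{e-1}$ for some nonnegative integers $h_j$ (depending on $i$). *)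

(* Defs.v *)
(* Formal power series k[[t]] are modelled as coefficient
   sequences nat -> k with the Cauchy product; subrings of k[[t]] are
   predicates on this type. *)
From HB Require Import structures.
From mathcomp Require Import all_boot all_order all_algebra.
Set Implicit Arguments. Unset Strict Implicit. Unset Printing Implicit Defensive.
Import Order.TTheory GRing.Theory Num.Theory.
Local Open Scope ring_scope.

Section Series.
Variable k : fieldType.

Definition series := nat -> k.

Definition szero : series := fun _ => 0.
Definition sconst (c : k) : series := fun n => if n == 0%N then c else 0.
Definition sadd (f g : series) : series := fun n => f n + g n.
Definition sopp (f : series) : series := fun n => - f n.
Definition smul (f g : series) : series :=
  fun n => \sum_(i < n.+1) f i * g (n - i)%N.
Definition spow (x : series) (i : nat) : series := iter i (smul x) (sconst 1).
Definition ssum (I : finType) (F : I -> series) : series :=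
  fun n => \sum_(j : I) F j n.
(** substitution g(x) of a series x with x 0 = 0 into g in k[[X]]:
    coefficient n of sum_i g_i x^i only involves i <= n. *)
Definition scomp (g x : series) : series :=
  fun n => \sum_(i < n.+1) g i * spow x i n.

(** t-adic valuation: is_val a n  <->  a <> 0 and v(a) = n *)
Definition is_val (a : series) (n : nat) : Prop :=
  a n != 0 /\ forall i, (i < n)%N -> a i = 0.

Variable R : series -> Prop.

(** maximal ideal of R: the elements of R with zero constant term
    (the local / residue-field-k hypotheses below make this the maximal ideal). *)
Definition mideal (a : series) : Prop := R a /\ a 0%N = 0.

Fixpoint mpow (i : nat) : series -> Prop :=
  match i with
  | 0 => R
  | i'.+1 => fun c => exists (N : nat) (a b : 'I_N -> series),
       (forall l, mideal (a l) /\ mpow i' (b l)) /\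
       c = ssum (fun l => smul (a l) (b l))
  end.

Definition standing : Prop :=
  (* k <= R and R is a subring of k[[t]] (hence a domain) *)
  (forall c, R (sconst c)) /\
  (forall a b, R a -> R b -> R (sadd a b)) /\
  (forall a, R a -> R (sopp a)) /\
  (forall a b, R a -> R b -> R (smul a b)) /\
  (* local with maximal ideal m = mideal and residue field k:
     every element outside m is a unit of R *)
  (forall a, R a -> a 0%N != 0 -> exists b, R b /\ smul a b = sconst 1) /\
  (* complete in the m-adic topology *)
  (forall a : nat -> series, (forall n, R (a n)) ->
      (forall n, mpow n (sadd (a n.+1) (sopp (a n)))) ->
      exists L, R L /\ forall n, mpow n (sadd L (sopp (a n)))) /\
  (* nonzero conductor (R : k[[t]]) *)
  (exists c, c <> szero /\ forall g, R (smul c g)).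

Definition inS (s : nat) : Prop := exists r, R r /\ is_val r s.
Definition is_e (e : nat) : Prop :=
  (0 < e)%N /\ inS e /\ forall s, inS s -> (0 < s)%N -> (e <= s)%N.
Definition is_w (e j w : nat) : Prop :=
  inS w /\ w = j %[mod e] /\ forall s, inS s -> s = j %[mod e] -> (w <= s)%N.

Definition inv (I : series -> Prop) (u : nat) : Prop :=
  exists a, I a /\ is_val a u.

(** ord(a) = n  (max {i : a in m^i} = n; the m^i are decreasing) *)
Definition is_ord (a : series) (n : nat) : Prop := mpow n a /\ ~ mpow n.+1 a.
Definition is_vord (s n : nat) : Prop :=
  inv (mpow n) s /\ ~ inv (mpow n.+1) s.

Definition xideal (x : series) (a : series) : Prop :=
  exists r, R r /\ a = smul x r.

Definition ess_div_wrt (x : series) : Prop :=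
  forall u, inv (xideal x) u ->
    exists a n, xideal x a /\ is_val a u /\ is_vord u n /\ is_ord a n.

Definition ess_div : Prop :=
  exists e x, is_e e /\ R x /\ is_val x e /\ ess_div_wrt x.

Definition BF : Prop :=
  exists e x (f : 'I_e -> series),
    is_e e /\ R x /\ is_val x e /\
    (forall j : 'I_e, R (f j) /\ exists w, is_val (f j) w /\ is_w e j w) /\
    forall i : nat, exists h : 'I_e -> nat,
      (* m^i is the k[[x]]-span of x^(h_j) f_j ... *)
      (forall a, mpow i a <->
         exists g : 'I_e -> series,
           a = ssum (fun j => smul (scomp (g j) x) (smul (spow x (h j)) (f j)))) /\
      (forall g : 'I_e -> series,
         ssum (fun j => smul (scomp (g j) x) (smul (spow x (h j)) (f j))) = szero ->
         forall j, g j = szero).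

End Series.

(* Main.v *)
Require Import Defs.
From HB Require Import structures.
From mathcomp Require Import all_boot all_order all_algebra.
From Stdlib Require Import Lia FunctionalExtensionality Classical.
Set Implicit Arguments. Unset Strict Implicit. Unset Printing Implicit Defensive.
Import Order.TTheory GRing.Theory Num.Theory.
Local Open Scope ring_scope.

Ltac nlia := unfold addn, subn, muln, addn_rec, subn_rec, muln_rec in *; lia.

Section S.
Variable k : fieldType.
Implicit Types f g h x a : series k.

Lemma sext f g : (forall n, f n = g n) -> f = g.
Proof. move=> H; exact: functional_extensionality. Qed.

Definition Pn f (N : nat) : {poly k} := \poly_(i < N.+1) f i.

Lemma smul_poly f g (N m : nat) : (m <= N)%N -> smul f g m = (Pn f N * Pn g N)`_m.
Proof.
move=> hm; rewrite coefM /smul; apply: eq_bigr => i _.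
rewrite /Pn !coef_poly.
have h1 : (i < N.+1)%N by move: (ltn_ord i) hm => /ssrnat.ltP a /ssrnat.leP b; apply/ssrnat.ltP; nlia.
have h2 : (m - i < N.+1)%N by move: hm => /ssrnat.leP b; apply/ssrnat.ltP; nlia.
by rewrite h1 h2.
Qed.

Lemma coefM_eql (p q r : {poly k}) (m : nat) :
  (forall j, (j <= m)%N -> p`_j = q`_j) -> (p * r)`_m = (q * r)`_m.
Proof.
move=> H; rewrite !coefM; apply: eq_bigr => i _; rewrite H //.
by rewrite -ltnS.
Qed.

Lemma coefM_eqr (p q r : {poly k}) (m : nat) :
  (forall j, (j <= m)%N -> p`_j = q`_j) -> (r * p)`_m = (r * q)`_m.
Proof.
move=> H; rewrite !coefM; apply: eq_bigr => i _; rewrite H //.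
exact: leq_subr.
Qed.

Lemma smulA f g h : smul (smul f g) h = smul f (smul g h).
Proof.
apply: sext => m.
rewrite (smul_poly _ _ (leqnn m)) (smul_poly f _ (leqnn m)).
rewrite (@coefM_eql _ (Pn f m * Pn g m)); last first.
  by move=> j hj; rewrite /Pn coef_poly ltnS hj (smul_poly _ _ hj).
rewrite [RHS](@coefM_eqr _ (Pn g m * Pn h m)); last first.
  by move=> j hj; rewrite /Pn coef_poly ltnS hj (smul_poly _ _ hj).
by rewrite mulrA.
Qed.

Lemma smulC f g : smul f g = smul g f.
Proof.
apply: sext => m.
by rewrite (smul_poly _ _ (leqnn m)) (smul_poly g _ (leqnn m)) mulrC.
Qed.

Lemma smul1 f : smul (sconst 1) f = f.
Proof.
apply: sext => m; rewrite /smul big_ord_recl /sconst /= subn0 mul1r big1 ?addr0 //.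
by move=> i _; rewrite /bump /= mul0r.
Qed.

Lemma smul0 f : smul (szero k) f = (szero k).
Proof. by apply: sext => m; rewrite /smul big1 // => i _; rewrite /szero mul0r. Qed.

Lemma smulr0 f : smul f (szero k) = (szero k).
Proof. by rewrite smulC smul0. Qed.

Lemma spowD x (a b : nat) : smul (spow x a) (spow x b) = spow x (a + b).
Proof.
elim: a => [|a IH]; first by rewrite /spow /= smul1 add0n.
by rewrite addSn /spow /= smulA -[iter _ _ _]/(spow x a) -[iter (a+b) _ _]/(spow x (a+b)) IH.
Qed.

Lemma is_val_uniq a (u u' : nat) : is_val a u -> is_val a u' -> u = u'.
Proof.
rewrite /is_val => -[h1 h2] [h3 h4]; case: (ltngtP u u') => [H|H|//].
  by move: h1; rewrite h4 // eqxx.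
by move: h3; rewrite h2 // eqxx.
Qed.

Lemma is_val_ex a : a <> (szero k) -> exists u, is_val a u.
Proof.
move=> H.
have ex : exists n, a n != 0.
  apply: NNPP => hn; apply: H; apply: sext => n; apply/eqP.
  by apply: negbNE; apply/negP => hh; apply: hn; exists n.
exists (ex_minn ex); case: ex_minnP => m hm hmin; split => // i hi.
by apply/eqP; apply: negbNE; apply/negP => hh; move: (hmin _ hh); rewrite leqNgt hi.
Qed.

Lemma is_val_nz a u : is_val a u -> a <> (szero k).
Proof. by rewrite /is_val => -[h _] ha; move: h; rewrite ha /szero eqxx. Qed.

Lemma is_valM f g (a b : nat) : is_val f a -> is_val g b -> is_val (smul f g) (a + b).
Proof.
rewrite /is_val => -[fa fl] [gb gl]; split; last first.
  move=> m hm; rewrite /smul big1 // => i _.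
  case: (ltnP i a) => hi; first by rewrite fl // mul0r.
  rewrite gl ?mulr0 //; move: hm hi (ltn_ord i) => /ssrnat.ltP ? /ssrnat.leP ? /ssrnat.ltP ?; apply/ssrnat.ltP; nlia.
have ha : (a < (a + b).+1)%N by rewrite ltnS leq_addr.
rewrite /smul (bigD1 (Ordinal ha)) //= big1 ?addr0.
  by rewrite addKn mulf_neq0.
move=> i /eqP hne; have hne' : (i : nat) <> a by move=> hh; apply: hne; apply: val_inj.
case: (ltnP i a) => hi; first by rewrite fl // mul0r.
rewrite gl ?mulr0 //; move: hi (ltn_ord i) => /ssrnat.leP ? /ssrnat.ltP ?; apply/ssrnat.ltP; nlia.
Qed.

Lemma is_val_one : is_val (sconst (1 : k)) 0.
Proof. by split => //; rewrite /sconst /= oner_neq0. Qed.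

Lemma is_val_spow x (e q : nat) : is_val x e -> is_val (spow x q) (e * q).
Proof.
move=> hx; elim: q => [|q IH]; first by rewrite muln0; exact: is_val_one.
by rewrite mulnS; apply: (is_valM hx IH).
Qed.


Lemma spow_low x (e q n : nat) : is_val x e -> (n < e * q)%N -> spow x q n = 0.
Proof. by move=> hx hn; case: (is_val_spow q hx) => _ ->. Qed.

Lemma is_val_scomp g x (e p : nat) : (0 < e)%N -> is_val x e -> is_val g p ->
  is_val (scomp g x) (e * p).
Proof.
move=> he hx [gp gl]; split; last first.
  move=> n hn; rewrite /scomp big1 // => i _.
  case: (ltnP i p) => hi; first by rewrite gl // mul0r.
  rewrite (spow_low hx) ?mulr0 //; apply: (leq_trans hn); by rewrite leq_mul2l hi orbT.
have hp : (p < (e * p).+1)%N by rewrite ltnS leq_pmull.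
rewrite /scomp (bigD1 (Ordinal hp)) //= big1 ?addr0.
  by rewrite mulf_neq0 //; case: (is_val_spow p hx).
move=> i /eqP hne; have hne' : (i : nat) <> p by move=> hh; apply: hne; apply: val_inj.
case: (ltngtP i p) => hi; first by rewrite gl // mul0r.
  by rewrite (spow_low hx) ?mulr0 // ltn_pmul2l.
by case: hne'.
Qed.

Lemma scomp0 x : scomp (szero k) x = szero k.
Proof. by apply: sext => n; rewrite /scomp big1 // => i _; rewrite /szero mul0r. Qed.

Definition mono (q : nat) : series k := fun i => if i == q then 1 else 0.

Lemma scomp_mono x (e q : nat) : (0 < e)%N -> is_val x e -> scomp (mono q) x = spow x q.
Proof.
move=> he hx; apply: sext => n; rewrite /scomp.
case: (ltnP q n.+1) => hq.
  rewrite (bigD1 (Ordinal hq)) //= big1 ?addr0; first by rewrite /mono eqxx mul1r.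
  move=> i /eqP hne; have hne' : (i : nat) <> q by move=> hh; apply: hne; apply: val_inj.
  by rewrite /mono; case: eqP => // _; rewrite mul0r.
rewrite big1; last first.
  move=> i _; rewrite /mono; case: eqP => hi; last by rewrite mul0r.
  by move: (ltn_ord i) hq; rewrite hi => a b; move: (leq_trans a b); rewrite ltnn.
rewrite (spow_low hx) //; apply: leq_trans hq _; exact: leq_pmull.
Qed.

Lemma ssum_single (I : finType) (F : I -> series k) j0 :
  (forall j, j != j0 -> F j = szero k) -> ssum F = F j0.
Proof.
move=> H; apply: sext => n; rewrite /ssum (bigD1 j0) //= big1 ?addr0 //.
by move=> j hj; rewrite H.
Qed.

Lemma ssum_zero (I : finType) (F : I -> series k) :
  (forall j, F j = szero k) -> ssum F = szero k.
Proof. by move=> H; apply: sext => n; rewrite /ssum big1 // => j _; rewrite H. Qed.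

Lemma mpow_low (R : series k -> Prop) (i : nat) c : mpow R i c -> forall l, (l < i)%N -> c l = 0.
Proof.
elim: i c => [|i IH] c //= [N [a [b [Hab ->]]]] l hl.
rewrite /ssum big1 // => j _; rewrite /smul big1 // => t _.
case: (Hab j) => [[_ ha0] hb].
case: (posnP t) => ht; first by rewrite ht ha0 mul0r.
rewrite (IH _ hb) ?mulr0 //.
move: hl ht (ltn_ord t) => /ssrnat.ltP ? /ssrnat.ltP ? /ssrnat.ltP ?; apply/ssrnat.ltP; nlia.
Qed.

Lemma exists_step (P : nat -> Prop) (N : nat) : P 0%N -> ~ P N -> exists n, P n /\ ~ P n.+1.
Proof.
elim: N => [|N IH] h0 hN; first by [].
case: (classic (P N)) => hP; first by exists N.
exact: IH.
Qed.

Lemma R_spow (R : series k -> Prop) x (q : nat) : standing R -> R x -> R (spow x q).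
Proof.
move=> [Rc [_ [_ [Rm _]]]] Rx; elim: q => [|q IH]; first exact: Rc.
exact: Rm.
Qed.

End S.

Lemma p_ge1 (e p w s : nat) : (0 < e)%N -> (e * p + w = e + s)%N -> (w <= s)%N -> (1 <= p)%N.
Proof. case: p => // . rewrite muln0 add0n => h1 h2 h3. rewrite h2 in h3. move/ssrnat.ltP: h1 => h1. move/ssrnat.leP: h3. unfold addn, addn_rec. lia. Qed.

Theorem proposition1p4 (k : fieldType) (R : series k -> Prop) :
  standing R -> BF R -> ess_div R.
Proof.
move=> Hst [e [x [f [He [Rx [vx [Hf HB]]]]]]].
have Hst' := Hst; move: Hst' => [Rc [Radd [Ropp [Rmul _]]]].
have e0 : (0 < e)%N by case: He.
exists e, x; split => //; split => //; split => //.
move=> u [a0 [[r0 [Rr0 Ea0]] va0]]; subst a0.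
have r0nz : r0 <> szero k.
  by move=> hr; move: va0; rewrite hr smulr0 => /is_val_nz.
have [s vs] := is_val_ex r0nz.
have us : u = (e + s)%N by apply: (is_val_uniq va0); apply: is_valM.
pose P n := Defs.inv (mpow R n) u.
have P0 : P 0%N by exists (smul x r0); split => //; apply: Rmul.
have PN : ~ P u.+1.
  move=> [b [Hb vb]]; case: vb => hb _; move: hb.
  by rewrite (mpow_low Hb (ltnSn u)) eqxx.
have [n [Pn nPn]] := exists_step P0 PN.
have [b [Hb vb]] := Pn.
have [h [Hiff Hind]] := HB n.
have [g Eb] := (proj1 (Hiff b)) Hb.
have [W HW] := fin_all_exists (fun j => proj2 (Hf j)).
pose T j := smul (scomp (g j) x) (smul (spow x (h j)) (f j)).
have HT : forall j, exists v, T j = szero k \/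
    exists p, is_val (T j) v /\ v = (e * p + W j)%N /\ (h j <= p)%N.
  move=> j; case: (classic (g j = szero k)) => hg.
    by exists 0%N; left; rewrite /T hg scomp0 smul0.
  have [pg vg] := is_val_ex hg.
  exists (e * pg + (e * h j + W j))%N; right; exists (pg + h j)%N; split.
    apply: is_valM; first exact: is_val_scomp.
    apply: is_valM; first exact: is_val_spow.
    by case: (HW j).
  by rewrite mulnDr addnA; split => //; rewrite leq_addl.
have [V HV] := fin_all_exists HT.
pose nz j := T j (V j) != 0.
have nzP : forall j, nz j -> exists p, is_val (T j) (V j) /\ V j = (e * p + W j)%N /\ (h j <= p)%N.
  move=> j; rewrite /nz; case: (HV j) => [->|//]; by rewrite /szero eqxx.
have nnzP : forall j, ~~ nz j -> T j = szero k.
  move=> j; rewrite /nz; case: (HV j) => [//|[p [[hv _] _]]].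
  by rewrite hv.
have Vmod : forall j, nz j -> (V j %% e = j)%N.
  move=> j /nzP [p [_ [-> _]]]; rewrite mulnC modnMDl.
  by case: (HW j) => _ [_ [-> _]]; rewrite modn_small.
have [j0 nzj0] : exists j0, nz j0.
  apply: NNPP => hne; have : b = szero k.
    rewrite Eb; apply: ssum_zero => j; apply: nnzP; apply/negP => hj.
    by apply: hne; exists j.
  by apply: is_val_nz vb.
case: (arg_minnP V nzj0) => jm nzjm minjm.
have zero_other : forall j l, (l <= V jm)%N -> j != jm -> T j l = 0.
  move=> j l hl hj; case: (boolP (nz j)) => hnz; last by rewrite nnzP.
  have [p [[_ vl] _]] := nzP j hnz.
  apply: vl; rewrite (leq_ltn_trans hl) //.
  rewrite ltn_neqAle minjm // andbT; apply/eqP => hE.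
  move: hj; rewrite -(inj_eq val_inj) /= -(Vmod _ hnz) -(Vmod _ nzjm) hE.
  by rewrite eqxx.
have vbV : is_val b (V jm).
  rewrite Eb; split.
    rewrite /ssum (bigD1 jm) //= big1 ?addr0 //.
    by move=> j hj; apply: zero_other.
  move=> l hl; rewrite /ssum big1 // => j _.
  case: (eqVneq j jm) => [->|hj]; last by apply: zero_other => //; apply: ltnW.
  by have [p [[_ vl] _]] := nzP jm nzjm; apply: vl.
have uV : u = V jm by apply: is_val_uniq vb vbV.
have [p [_ [Vp hp]]] := nzP jm nzjm.
have [Wv [WS [Wmod Wmin]]] := HW jm.
have p1 : (1 <= p)%N.
  apply: (p_ge1 e0 (s := s) (w := W jm)); first by rewrite -Vp -uV us.
  apply: Wmin; first by exists r0.
  rewrite -Wmod -(modnDl s e) -us uV Vp mulnC modnMDl //.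
exists (smul (spow x p) (f jm)), n.
have Rf : R (f jm) by case: (Hf jm).
have vA : is_val (smul (spow x p) (f jm)) u.
  by rewrite uV Vp; apply: is_valM => //; apply: is_val_spow.
have mA : mpow R n (smul (spow x p) (f jm)).
  apply/(Hiff _); exists (fun j => if j == jm then mono k (p - h jm) else szero k).
  rewrite (ssum_single (j0 := jm)); last first.
    by move=> j hj; rewrite (negbTE hj) scomp0 smul0.
  rewrite eqxx (scomp_mono _ e0 vx) -smulA spowD subnK //.
split; last split => //; last split.
- case: p p1 {Vp hp vA mA} => // p' _.
  exists (smul (spow x p') (f jm)); split; first by apply: Rmul => //; apply: R_spow.
  by rewrite -smulA.
- by split.
- split => // hA; apply: nPn; by exists (smul (spow x p) (f jm)).
Qed.
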